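(* Let $X$ be a $T_0$ space. If $GSI_2$-convergence in $X$ is topological, then $X$ is strongly $QI_2$-continuous.
   Context: For a $T_0$ space $X$, the specialization order is $x\le y$ iff $x\in \mathrm{cl}\{y\}$; $\uparrow A=\{x: a\le x\text{ for some } a\in A\}$, $\uparrow x=\uparrow\{x\}$; $A^\uparrow$, $A^\downarrow$ are the sets of upper and lower bounds of $A$, and $A^\delta=(A^\uparrow)^\downarrow$. A nonempty subset $A$ of a space is irreducible if whenever $A\subseteq F_1\cup F_2$ with $F_1,F_2$ closed, $A\subseteq F_1$ or $A\subseteq F_2$. $X^{(<\omega)}$ is the set of nonempty finite subsets of $X$. $P_S(X)$ is the set of nonempty compact saturated (upper) subsets of $X$ with the upper Vietoris topology, basis $\{\square U: U\text{ open}\}$, $\square U=\{Q: Q\subseteq U\}$. A net is eventually in $U$ if from some index on all its terms lie in $U$; it converges to $x$ in a topology if it is eventually in every open set containing $x$. $U\subseteq X$ is $SI_2$-open if $U$ is open and for every irreducible $F\subseteq X$, $F^\delta\cap U\ne\emptyset$ implies $F\cap U\neq\emptyset$. A net $(x_i)_{i\in I}$ $GSI_2$-converges to $x$ if there exists $\mathcal F\subseteq X^{(<\omega)}$ with $\{\uparrow G: G\in\mathcal F\}$ irreducible in $P_S(X)$ such that (i) for every open $U$, if $\uparrow G\subseteq U$ for some $G\in\mathcal F$ then $x_i\in U$ eventually, and (ii) $\bigcap_{G\in\mathcal F}\uparrow G\subseteq\uparrow x$. Let $\mathcal{O}(\mathcal{GSI}_2(X))$ be the topology of all $U\subseteq X$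 such that every net $GSI_2$-converging to a point of $U$ is eventually in $U$. $GSI_2$-convergence in $X$ is topological if for every net and point, the net $GSI_2$-converges to the point iff it converges to it in the topology $\mathcal{O}(\mathcal{GSI}_2(X))$. For $A\subseteq X$, $x\in X$, $A\ll_{I_2}x$ means: for every irreducible $D\subseteq X$ with $x\in D^\delta$, $A\cap\mathrm{cl}D\ne\emptyset$. For $x\in X$, $w(x)=\{\uparrow F: F\in X^{(<\omega)}, F\ll_{I_2}x\}$. $X$ is $QI_2$-continuous if for every $x\in X$, $w(x)$ is irreducible in $P_S(X)$ and $\uparrow x=\bigcap w(x)$. $X$ is strongly $QI_2$-continuous if it is $QI_2$-continuous and for every $F\in X^{(<\omega)}$, $x\in X$ with $F\ll_{I_2}x$, and every open $U$ with $F\subseteq U$, there is an $SI_2$-open set $W$ with $x\in W\subseteq U$. *)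

(* Defs.v *)
From HB Require Import structures.
From mathcomp Require Import all_boot all_order.
From mathcomp Require Import boolp classical_sets functions cardinality topology.
Set Implicit Arguments. Unset Strict Implicit. Unset Printing Implicit Defensive.
Local Open Scope classical_set_scope.

Section Defs.
Variable X : topologicalType.

Definition spec_le (x y : X) : Prop := closure [set y] x.

Definition up (A : set X) : set X := [set x | exists2 a, A a & spec_le a x].
Definition upper_bounds (A : set X) : set X := [set y | forall a, A a -> spec_le a y].
Definition lower_bounds (A : set X) : set X := [set y | forall a, A a -> spec_le y a].
Definition delta (A : set X) : set X := lower_bounds (upper_bounds A).

Definition irreducible (A : set X) : Prop :=
  A !=set0 /\ forall F1 F2 : set X, closed F1 -> closed F2 ->
    A `<=` F1 `|` F2 -> A `<=` F1 \/ A `<=` F2.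

Definition finsub (G : set X) : Prop := finite_set G /\ G !=set0.

Definition saturated (Q : set X) : Prop := up Q `<=` Q.
Definition PS : set (set X) := [set Q | Q !=set0 /\ compact Q /\ saturated Q].
Definition box (U : set X) : set (set X) := [set Q | PS Q /\ Q `<=` U].
(* upper Vietoris topology on PS: unions of basic opens box U, U open *)
Definition PS_open (W : set (set X)) : Prop :=
  W `<=` PS /\ forall Q, W Q -> exists U : set X, [/\ open U, box U Q & box U `<=` W].
Definition PS_closed (C : set (set X)) : Prop :=
  exists W, PS_open W /\ C = PS `\` W.
Definition PS_irreducible (A : set (set X)) : Prop :=
  A `<=` PS /\ A !=set0 /\ forall C1 C2, PS_closed C1 -> PS_closed C2 ->
    A `<=` C1 `|` C2 -> A `<=` C1 \/ A `<=` C2.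

Definition SI2_open (U : set X) : Prop :=
  open U /\ forall F, irreducible F -> delta F `&` U !=set0 -> F `&` U !=set0.

Definition directed (I : Type) (le : I -> I -> Prop) : Prop :=
  [/\ (forall i, le i i), (forall i j k, le i j -> le j k -> le i k),
      inhabited I & forall i j, exists k, le i k /\ le j k].
Definition eventually_in (I : Type) (le : I -> I -> Prop) (x : I -> X) (U : set X) :=
  exists i0, forall i, le i0 i -> U (x i).

Definition ups (F : set (set X)) : set (set X) := [set Q | exists2 G, F G & Q = up G].

Definition GSI2_conv (I : Type) (le : I -> I -> Prop) (x : I -> X) (y : X) : Prop :=
  exists F : set (set X), [/\ F `<=` finsub, PS_irreducible (ups F),
    (forall U, open U -> (exists2 G, F G & up G `<=` U) -> eventually_in le x U)
    & \bigcap_(G in F) up G `<=` up [set y]].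

Definition O_GSI2 : set (set X) :=
  [set U | forall (I : Type) (le : I -> I -> Prop) (x : I -> X) (y : X),
     directed le -> U y -> GSI2_conv le x y -> eventually_in le x U].

Definition O_GSI2_conv (I : Type) (le : I -> I -> Prop) (x : I -> X) (y : X) : Prop :=
  forall U, O_GSI2 U -> U y -> eventually_in le x U.

Definition GSI2_topological : Prop :=
  forall (I : Type) (le : I -> I -> Prop) (x : I -> X) (y : X),
    directed le -> (GSI2_conv le x y <-> O_GSI2_conv le x y).

Definition wayI2 (A : set X) (x : X) : Prop :=
  forall D, irreducible D -> delta D x -> A `&` closure D !=set0.

Definition w (x : X) : set (set X) := [set Q | exists2 F, finsub F /\ wayI2 F x & Q = up F].

Definition QI2_continuous : Prop :=
  forall x, PS_irreducible (w x) /\ up [set x] = \bigcap_(Q in w x) Q.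

Definition strongly_QI2_continuous : Prop :=
  QI2_continuous /\
  forall (F : set X) (x : X), finsub F -> wayI2 F x ->
    forall U, open U -> F `<=` U -> exists W, [/\ SI2_open W, W x & W `<=` U].
End Defs.

(* Main.v *)
Require Import Defs.
From HB Require Import structures.
From mathcomp Require Import all_boot all_order.
From mathcomp Require Import boolp classical_sets functions cardinality topology.
Set Implicit Arguments. Unset Strict Implicit. Unset Printing Implicit Defensive.
Local Open Scope classical_set_scope.

Lemma spec_refl {X : topologicalType} (a : X) : spec_le a a.
Proof. exact: subset_closure. Qed.

Lemma open_up {X : topologicalType} (U : set X) a b :
  open U -> U a -> spec_le a b -> U b.
Proof.
move=> oU Ua ab; have := ab U (open_nbhs_nbhs (conj oU Ua)).
by case=> c [-> ].
Qed.

Lemma closed_down {X : topologicalType} (C : set X) a b :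
  closed C -> C b -> spec_le a b -> C a.
Proof.
move=> cC Cb ab; apply: cC; apply: (closureS _ ab).
by move=> z ->.
Qed.

Lemma spec_trans {X : topologicalType} (a b c : X) :
  spec_le a b -> spec_le b c -> spec_le a c.
Proof. move=> ab bc; exact: (closed_down (@closed_closure _ _) bc ab). Qed.

Lemma sub_up {X : topologicalType} (G : set X) : G `<=` up G.
Proof. by move=> g Gg; exists g => //; exact: spec_refl. Qed.

Lemma up_sub_open {X : topologicalType} (G U : set X) :
  open U -> G `<=` U -> up G `<=` U.
Proof. by move=> oU GU z [g Gg gz]; exact: (open_up oU (GU _ Gg) gz). Qed.

Lemma up1_compact {X : topologicalType} (y : X) : compact (up [set y]).
Proof.
move=> F FF Fy; exists y; split; first exact: sub_up.
move=> A N FA; rewrite nbhsE => -[W [oW Wy] WN].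
have [z [Az [a -> yz]]] := filter_ex (filterI FA Fy).
by exists z; split => //; apply: WN; exact: (open_up oW Wy yz).
Qed.

Lemma up_seq_compact {X : topologicalType} (s : seq X) : compact (up [set` s]).
Proof.
elim: s => [|a s IH].
  rewrite (_ : up _ = set0); first exact: compact0.
  by apply/seteqP; split => z // [b].
rewrite (_ : up _ = up [set a] `|` up [set` s]); first exact: (compactU (@up1_compact _ a) IH).
apply/seteqP; split => z.
  move=> [b]; rewrite /= inE => /orP[/eqP ->|bs] bz; first by left; exists a.
  by right; exists b.
case=> -[b bin bz]; exists b => //=; rewrite inE.
  by rewrite bin eqxx.
by rewrite bin orbT.
Qed.

Lemma up_finite_compact {X : topologicalType} (G : set X) :
  finite_set G -> compact (up G).
Proof. by move=> /finite_seqP[s ->]; exact: up_seq_compact. Qed.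

Lemma upPS {X : topologicalType} (G : set X) : finsub G -> PS (up G).
Proof.
move=> [fG [g Gg]]; split; first by exists g; exact: sub_up.
split; first exact: up_finite_compact.
by move=> z [y [a Ga ay] yz]; exists a => //; exact: spec_trans yz.
Qed.

Lemma PS_box_open {X : topologicalType} (U : set X) : open U -> PS_open (box U).
Proof. by move=> oU; split => [Q []//|Q bQ]; exists U; split. Qed.

Lemma PS_irr_box {X : topologicalType} (A : set (set X)) (U1 U2 : set X) :
  PS_irreducible A -> open U1 -> open U2 ->
  (exists2 Q, A Q & Q `<=` U1) -> (exists2 Q, A Q & Q `<=` U2) ->
  exists2 Q, A Q & Q `<=` U1 `&` U2.
Proof.
move=> [AP [A0 Airr]] o1 o2 [Q1 AQ1 Q1U] [Q2 AQ2 Q2U].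
apply: contrapT => nQ.
have cl U : open U -> PS_closed (@PS X `\` box U).
  by move=> oU; exists (box U); split => //; exact: PS_box_open.
have : A `<=` (@PS X `\` box U1) `|` (@PS X `\` box U2).
  move=> Q AQ; have PQ := AP _ AQ.
  have [h1|h1] := pselect (Q `<=` U1); last by left; split => // -[].
  have [h2|h2] := pselect (Q `<=` U2); last by right; split => // -[].
  exfalso; apply: nQ; exists Q => // z Qz; split; [exact: h1|exact: h2].
move=> /(Airr _ _ (cl _ o1) (cl _ o2)) [].
- by move=> /(_ _ AQ1) [_]; apply; split => //; exact: AP.
- by move=> /(_ _ AQ2) [_]; apply; split => //; exact: AP.
Qed.

Lemma PS_irr_intro {X : topologicalType} (A : set (set X)) :
  A `<=` @PS X -> A !=set0 ->
  (forall U1 U2 : set X, open U1 -> open U2 ->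
    (exists2 Q, A Q & Q `<=` U1) -> (exists2 Q, A Q & Q `<=` U2) ->
    exists2 Q, A Q & Q `<=` U1 `&` U2) -> PS_irreducible A.
Proof.
move=> AP A0 H; split => //; split => // C1 C2 [W1 [[_ W1o] ->]] [W2 [[_ W2o] ->]] AC.
apply: contrapT => /not_orP [n1 n2].
have [Q1 AQ1 nQ1] : exists2 Q, A Q & ~ (@PS X `\` W1) Q.
  apply: contrapT => h; apply: n1 => Q AQ; apply: contrapT => h'; apply: h; by exists Q.
have W1Q1 : W1 Q1 by apply: contrapT => h; apply: nQ1; split => //; exact: AP.
have [Q2 AQ2 nQ2] : exists2 Q, A Q & ~ (@PS X `\` W2) Q.
  apply: contrapT => h; apply: n2 => Q AQ; apply: contrapT => h'; apply: h; by exists Q.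
have W2Q2 : W2 Q2 by apply: contrapT => h; apply: nQ2; split => //; exact: AP.
have [U1 [oU1 [_ Q1U1] bU1]] := W1o _ W1Q1.
have [U2 [oU2 [_ Q2U2] bU2]] := W2o _ W2Q2.
have [Q AQ QU] := H U1 U2 oU1 oU2 (ex_intro2 _ _ Q1 AQ1 Q1U1) (ex_intro2 _ _ Q2 AQ2 Q2U2).
have PQ := AP _ AQ.
have WQ1 : W1 Q by apply: bU1; split => // z /QU [].
have WQ2 : W2 Q by apply: bU2; split => // z /QU [].
by case: (AC _ AQ) => -[_ ?].
Qed.

Definition Fsing {X : topologicalType} (D : set X) : set (set X) :=
  [set G | exists2 d, D d & G = [set d]].

Lemma Fsing_finsub {X : topologicalType} (D : set X) : Fsing D `<=` @finsub X.
Proof. by move=> G [d Dd ->]; split; [exact: finite_set1|exists d]. Qed.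

Lemma Fsing_irr {X : topologicalType} (D : set X) :
  irreducible D -> PS_irreducible (ups (Fsing D)).
Proof.
move=> [[d0 Dd0] Dirr]; apply: PS_irr_intro.
- move=> Q [G FG ->]; apply: upPS. exact: (Fsing_finsub FG).
- by exists (up [set d0]); exists [set d0] => //; exists d0.
move=> U1 U2 o1 o2 [Q1 [G1 [d1 Dd1 ->] ->] Q1U] [Q2 [G2 [d2 Dd2 ->] ->] Q2U].
have [d [Dd [dU1 dU2]]] : D `&` (U1 `&` U2) !=set0.
  apply: contrapT => h.
  have : D `<=` ~` U1 `|` ~` U2.
    move=> z Dz; have [z1|z1] := pselect (U1 z); last by left.
    have [z2|z2] := pselect (U2 z); last by right.
    by exfalso; apply: h; exists z.
  have c1 : closed (~` U1) by rewrite closedC.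
  have c2 : closed (~` U2) by rewrite closedC.
  move=> /(Dirr _ _ c1 c2) [].
  + by move=> /(_ _ Dd1); apply; apply: Q1U; exact: sub_up.
  + by move=> /(_ _ Dd2); apply; apply: Q2U; exact: sub_up.
exists (up [set d]); first by exists [set d] => //; exists d.
apply: up_sub_open; first exact: openI.
by move=> z ->; split.
Qed.

Lemma irr1 {X : topologicalType} (y : X) : irreducible [set y].
Proof.
split; first by exists y.
move=> F1 F2 _ _ /(_ y erefl) [h|h]; [left|right]; by move=> z ->.
Qed.

Lemma netM {X : topologicalType} (F : set (set X)) (y : X) (V S : set X) :
  F `<=` @finsub X -> PS_irreducible (ups F) ->
  \bigcap_(G in F) up G `<=` up [set y] -> O_GSI2 V -> V y ->
  (forall U, open U -> (exists2 G, F G & up G `<=` U) -> U `&` S !=set0) ->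
  V `&` S !=set0.
Proof.
move=> Ff Firr Fint OV Vy HS.
pose Idx := {p : set X * X | open p.1 /\ (exists2 G, F G & up G `<=` p.1) /\ p.1 p.2 /\ S p.2}.
pose le (i j : Idx) := (sval j).1 `<=` (sval i).1.
pose xn (i : Idx) := (sval i).2.
have Hdir : directed le.
  split.
  - by move=> i; rewrite /le.
  - by move=> i j k ij jk; rewrite /le; exact: subset_trans jk ij.
  - have [Q [G FG _]] := Firr.2.1.
    have [s [_ Ss]] := HS setT openT (ex_intro2 _ _ G FG (@subsetT _ _)).
    exact: (inhabits (exist _ (setT, s) (conj openT (conj (ex_intro2 _ _ G FG (@subsetT _ _)) (conj I Ss))))).
  - move=> i j; have [o1 [h1 _]] := svalP i; have [o2 [h2 _]] := svalP j.
    rewrite /le.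
    move: o1 h1 o2 h2; set U1 := (sval i).1; set U2 := (sval j).1 => o1 h1 o2 h2.
    have [Q [G FG ->] QU] : exists2 Q, ups F Q & Q `<=` U1 `&` U2.
      apply: PS_irr_box => //.
        by case: h1 => G FG GU; exists (up G) => //; exists G.
      by case: h2 => G FG GU; exists (up G) => //; exists G.
    have o12 := openI o1 o2.
    have [s [U12s Ss]] := HS _ o12 (ex_intro2 _ _ G FG QU).
    exists (exist _ (U1 `&` U2, s) (conj o12 (conj (ex_intro2 _ _ G FG QU) (conj U12s Ss)))).
    by rewrite /le /=; split => z [].
have Hconv : GSI2_conv le xn y.
  exists F; split => //.
  move=> U oU [G FG GU].
  have [s [Us Ss]] := HS U oU (ex_intro2 _ _ G FG GU).
  exists (exist _ (U, s) (conj oU (conj (ex_intro2 _ _ G FG GU) (conj Us Ss)))).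
  move=> j; have [_ [_ [Wt _]]] := svalP j; rewrite /le /xn /= => WU.
  exact: WU.
have [i0 Hi0] := OV Idx le xn y Hdir Vy Hconv.
exists (xn i0); split; first exact: (Hi0 i0 (fun _ h => h)).
by have [_ [_ [_ Ss]]] := svalP i0.
Qed.

Lemma netN {X : topologicalType} (F : set (set X)) (y : X) (V : set X) :
  F `<=` @finsub X -> PS_irreducible (ups F) ->
  \bigcap_(G in F) up G `<=` up [set y] -> O_GSI2 V -> V y ->
  exists2 G, F G & up G `<=` V.
Proof.
move=> Ff Firr Fint OV Vy; apply: contrapT => nG.
have HS : forall U, open U -> (exists2 G, F G & up G `<=` U) -> U `&` ~` V !=set0.
  move=> U oU [G FG GU]; apply: contrapT => h; apply: nG; exists G => //.
  move=> z /GU Uz; apply: contrapT => nVz; apply: h; by exists z.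
have [z [Vz nVz]] := netM Ff Firr Fint OV Vy HS.
exact: nVz Vz.
Qed.

Lemma Fsing_int {X : topologicalType} (D : set X) (y : X) :
  delta D y -> \bigcap_(G in Fsing D) up G `<=` up [set y].
Proof.
move=> Dy z Hz; exists y => //; apply: Dy => a Da.
by have [b -> ] := Hz [set a] (ex_intro2 _ _ a Da erefl).
Qed.

Lemma delta1 {X : topologicalType} (y : X) : delta [set y] y.
Proof. by move=> a ub; exact: ub y erefl. Qed.

Lemma O_open {X : topologicalType} (V : set X) : O_GSI2 V -> open V.
Proof.
move=> OV; rewrite openE => y Vy; apply: contrapT => nN.
have HS : forall U, open U -> (exists2 G, Fsing [set y] G & up G `<=` U) ->
    U `&` ~` V !=set0.
  move=> U oU [G [d -> ->] GU].
  apply: contrapT => h; apply: nN; rewrite /interior nbhsE; exists U.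
    by split => //; apply: GU; exact: sub_up.
  move=> z Uz; apply: contrapT => nz; apply: h; by exists z.
have [z [Vz nVz]] := netM (Fsing_finsub (D:=[set y])) (Fsing_irr (@irr1 _ y))
  (Fsing_int (@delta1 _ y)) OV Vy HS.
exact: nVz Vz.
Qed.

Lemma O_SI2 {X : topologicalType} (V : set X) : O_GSI2 V -> SI2_open V.
Proof.
move=> OV; split; first exact: O_open.
move=> D Dirr [y [Dy Vy]].
have [G [d Dd ->] dV] := netN (Fsing_finsub (D:=D)) (Fsing_irr Dirr) (Fsing_int Dy) OV Vy.
by exists d; split => //; apply: dV; exact: sub_up.
Qed.

Lemma O_setI {X : topologicalType} (V W : set X) :
  O_GSI2 V -> O_GSI2 W -> O_GSI2 (V `&` W).
Proof.
move=> OV OW I le x y dir [Vy Wy] conv.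
have [i1 h1] := OV _ _ _ _ dir Vy conv; have [i2 h2] := OW _ _ _ _ dir Wy conv.
case: dir => _ tr _ ub; have [k [k1 k2]] := ub i1 i2.
exists k => i ki; split; [apply: h1; exact: tr _ _ _ k1 ki|apply: h2; exact: tr _ _ _ k2 ki].
Qed.

Lemma O_setT {X : topologicalType} : O_GSI2 (@setT X).
Proof. by move=> I le x y [_ _ [i] _] _ _; exists i. Qed.

Lemma netK {X : topologicalType} (x : X) (C : set X) :
  GSI2_topological X ->
  (forall V, O_GSI2 V -> V x -> V `&` C !=set0) ->
  exists F : set (set X), [/\ F `<=` @finsub X, PS_irreducible (ups F),
    \bigcap_(G in F) up G `<=` up [set x] &
    forall G, F G -> forall U, open U -> G `<=` U ->
      exists V, [/\ O_GSI2 V, V x & V `&` C `<=` U]].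
Proof.
move=> Htop HC.
pose Idx := {p : set X * X | O_GSI2 p.1 /\ p.1 x /\ p.1 p.2 /\ C p.2}.
pose le (i j : Idx) := (sval j).1 `<=` (sval i).1.
pose xn (i : Idx) := (sval i).2.
have Hdir : directed le.
  split.
  - by move=> i; rewrite /le.
  - by move=> i j k ij jk; rewrite /le; exact: subset_trans jk ij.
  - have [c [_ Cc]] := HC setT O_setT I.
    exact: (inhabits (exist _ (setT, c) (conj O_setT (conj I (conj I Cc))))).
  - move=> i j; have [o1 [x1 _]] := svalP i; have [o2 [x2 _]] := svalP j.
    rewrite /le.
    move: o1 x1 o2 x2; set U1 := (sval i).1; set U2 := (sval j).1 => o1 x1 o2 x2.
    have o12 := O_setI o1 o2.
    have [s [U12s Ss]] := HC _ o12 (conj x1 x2).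
    exists (exist _ (U1 `&` U2, s) (conj o12 (conj (conj x1 x2) (conj U12s Ss)))).
    by rewrite /=; split => z [].
have Hconv : GSI2_conv le xn x.
  apply/(Htop Idx le xn x Hdir) => W OW Wx.
  have [c [Wc Cc]] := HC W OW Wx.
  exists (exist _ (W, c) (conj OW (conj Wx (conj Wc Cc)))).
  move=> j; have [_ [_ [Wt _]]] := svalP j; rewrite /le /xn /= => WU.
  exact: WU.
have [F [Ff Firr Fev Fint]] := Hconv.
exists F; split => //.
move=> G FG U oU GU.
have [i0 Hi] := Fev U oU (ex_intro2 _ _ G FG (up_sub_open oU GU)).
have [OV0 [V0x _]] := svalP i0.
exists (sval i0).1; split => // v [V0v Cv].
exact: (Hi (exist _ ((sval i0).1, v) (conj OV0 (conj V0x (conj V0v Cv)))) (fun _ h => h)).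
Qed.

Lemma rudin {X : topologicalType} (F : set (set X)) (C : set X) :
  F `<=` @finsub X -> PS_irreducible (ups F) -> closed C ->
  (forall G, F G -> G `&` C !=set0) ->
  exists D, [/\ closed D, D `<=` C, irreducible D & forall G, F G -> G `&` D !=set0].
Proof.
move=> Ff Firr cC HC.
pose P (A : set X) := [/\ closed A, A `<=` C & forall G, F G -> G `&` A !=set0].
pose T := {A : set X | P A}.
pose R (s t : T) := `[< sval t `<=` sval s >].
have Rrefl : forall t, R t t by move=> t; apply/asboolP.
have Rtr : forall r s t, R r s -> R s t -> R r t.
  by move=> r s t /asboolP rs /asboolP st; apply/asboolP; exact: subset_trans st rs.
have Ranti : forall s t, R s t -> R t s -> s = t.
  move=> [A PA] [B PB] /asboolP /= BA /asboolP /= AB.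
  have eAB : A = B by apply/seteqP; split.
  move: PA PB; rewrite eAB => PA PB; congr exist; exact: Prop_irrelevance.
have Rch : forall A : set T, total_on A R -> exists t, forall s, A s -> R s t.
  move=> Ach tot.
  pose t0 := C `&` \bigcap_(a in Ach) sval a.
  have Pt0 : P t0.
    split.
    - apply: closedI => //; apply: closed_bigI => a _; by case: (svalP a).
    - by move=> z [].
    - move=> G FG.
      have [[a0 Aa0]|A0] := pselect (Ach !=set0); last first.
        have [g [Gg Cg]] := HC G FG; exists g; split => //; split => // a Aa.
        by exfalso; apply: A0; exists a.
      have [fG _] := Ff G FG.
      have /finite_seqP [s Gs] := fG.
      apply: contrapT => nG.
      have key : forall s' : seq X, {subset s' <= s} ->
          exists2 a, Ach a & forall g, g \in s' -> ~ sval a g.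
        elim => [|g s' IH] sub; first by exists a0.
        have sub' : {subset s' <= s} by move=> z zs; apply: sub; rewrite inE zs orbT.
        have [a' Aa' ha'] := IH sub'.
        have gs : g \in s by apply: sub; rewrite inE eqxx.
        have ngt : ~ t0 g by move=> tg; apply: nG; exists g; split => //; rewrite Gs.
        have [a Aa nag] : exists2 a, Ach a & ~ sval a g.
          have [Cg|nCg] := pselect (C g); last first.
            exists a' => // ag; apply: nCg; have [_ a'C _] := svalP a'; exact: a'C.
          apply: contrapT => h; apply: ngt; split => // a Aa.
          apply: contrapT => nag; apply: h; by exists a.
        have [/asboolP aa'|/asboolP a'a] := tot _ _ Aa Aa'.
          exists a' => // z; rewrite inE => /orP [/eqP -> | zs']; last exact: ha'.
          by move=> /aa'; exact: nag.
        exists a => // z; rewrite inE => /orP [/eqP -> // | zs' /a'a]; exact: ha'.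
      have [a Aa ha] := key s (fun z h => h).
      have [_ _ am] := svalP a.
      have [g [Gg ag]] := am G FG.
      by apply: (ha g) ag; move: Gg; rewrite Gs.
  exists (exist _ t0 Pt0) => a Aa; apply/asboolP => z [_ h]; exact: h.
have [t tmax] := Zorn Rrefl Rtr Ranti Rch.
have [cD DC DG] := svalP t.
exists (sval t); split => //.
split.
  have [Q [G FG _]] := Firr.2.1; have [g [_ Dg]] := DG G FG; by exists g.
move=> F1 F2 c1 c2 DF; apply: contrapT => /not_orP [n1 n2].
have ex_bad : forall F', closed F' -> ~ sval t `<=` F' ->
    exists2 G, F G & ~ (G `&` (sval t `&` F') !=set0).
  move=> F' cF' nDF; apply: contrapT => h.
  have PD : P (sval t `&` F').
    split; [exact: closedI | by move=> z [/DC] |].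
    move=> G FG; apply: contrapT => hG; apply: h; by exists G.
  have Rts : R t (exist _ _ PD) by apply/asboolP => z [].
  have e := tmax _ Rts.
  apply: nDF => z Dz.
  have : sval (exist _ _ PD) z by rewrite e.
  by case.
have [G1 FG1 h1] := ex_bad F1 c1 n1.
have [G2 FG2 h2] := ex_bad F2 c2 n2.
have o1 : open (~` (sval t `&` F1)) by rewrite openC; exact: closedI.
have o2 : open (~` (sval t `&` F2)) by rewrite openC; exact: closedI.
have sub1 : G1 `<=` ~` (sval t `&` F1) by move=> g Gg hg; apply: h1; exists g.
have sub2 : G2 `<=` ~` (sval t `&` F2) by move=> g Gg hg; apply: h2; exists g.
have [Q [G FG ->] QU] := PS_irr_box Firr o1 o2
  (ex_intro2 _ _ (up G1) (ex_intro2 _ _ G1 FG1 erefl) (up_sub_open o1 sub1))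
  (ex_intro2 _ _ (up G2) (ex_intro2 _ _ G2 FG2 erefl) (up_sub_open o2 sub2)).
have [g [Gg Dg]] := DG G FG.
have [u1 u2] := QU g (sub_up Gg).
by case: (DF g Dg) => Fg; [apply: u1| apply: u2].
Qed.

Lemma crux {X : topologicalType} (x : X) (G U : set X) :
  GSI2_topological X -> wayI2 G x -> open U -> G `<=` U ->
  exists V, [/\ O_GSI2 V, V x & V `<=` U].
Proof.
move=> Htop Gx oU GU; apply: contrapT => nV.
have HC : forall V, O_GSI2 V -> V x -> V `&` ~` U !=set0.
  move=> V OV Vx; apply: contrapT => h; apply: nV; exists V; split => // z Vz.
  apply: contrapT => nz; apply: h; by exists z.
have [F [Ff Firr Fint Fev]] := netK Htop HC.
have cC : closed (~` U) by rewrite closedC.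
have FC : forall G', F G' -> G' `&` ~` U !=set0.
  move=> G' FG'; apply: contrapT => h.
  have G'U : G' `<=` U by move=> z Gz; apply: contrapT => nz; apply: h; exists z.
  have [V [OV Vx VU]] := Fev G' FG' U oU G'U.
  have [z [Vz nUz]] := HC V OV Vx.
  exact: (nUz (VU z (conj Vz nUz))).
have [D [cD DC Dirr DG]] := rudin Ff Firr cC FC.
have dx : delta D x.
  move=> z zub.
  have : up [set x] z.
    apply: Fint => G' FG'; have [g [G'g Dg]] := DG G' FG'.
    by exists g => //; exact: zub _ Dg.
  by case=> a ->.
have [g [Gg clg]] := Gx D Dirr dx.
have : (~` U) g by apply: DC; apply: cD.
by apply; apply: GU.
Qed.

Theorem proposition4p10 (X : topologicalType) :
  kolmogorov_space X -> GSI2_topological X -> strongly_QI2_continuous X.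
Proof.
move=> _ Htop.
have key : forall x : X, exists F : set (set X), [/\ F `<=` @finsub X,
    PS_irreducible (ups F), \bigcap_(G in F) up G `<=` up [set x] &
    forall G, F G -> w x (up G)].
  move=> x.
  have [F [Ff Firr Fint Fev]] := netK (C := setT) Htop
    (fun V _ Vx => ex_intro _ x (conj Vx I)).
  exists F; split => // G FG; exists G => //; split; first exact: Ff.
  move=> D Dirr Dx; apply: contrapT => h.
  have oc : open (~` closure D) by rewrite openC; exact: closed_closure.
  have GU : G `<=` ~` closure D by move=> g Gg clg; apply: h; exists g.
  have [V [OV Vx VU]] := Fev G FG _ oc GU.
  have [d [Dd Vd]] := (O_SI2 OV).2 D Dirr (ex_intro _ x (conj Dx Vx)).
  by apply: (VU d (conj Vd I)); apply: subset_closure.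
split.
  move=> x; have [F [Ff Firr Fint FW]] := key x.
  split.
    apply: PS_irr_intro.
    - by move=> Q [G [fG _] ->]; exact: upPS.
    - by have [Q [G FG _]] := Firr.2.1; exists (up G); exact: FW.
    move=> U1 U2 o1 o2 [Q1 [G1 [_ G1x] ->] Q1U] [Q2 [G2 [_ G2x] ->] Q2U].
    have [V1 [OV1 V1x V1U]] := crux Htop G1x o1 (subset_trans (@sub_up _ G1) Q1U).
    have [V2 [OV2 V2x V2U]] := crux Htop G2x o2 (subset_trans (@sub_up _ G2) Q2U).
    have [G FG GV] := netN Ff Firr Fint (O_setI OV1 OV2) (conj V1x V2x).
    exists (up G); first exact: FW.
    by move=> z /GV [? ?]; split; [exact: V1U | exact: V2U].
  apply/seteqP; split.
    move=> z [a -> xz] Q [G [_ Gx] ->].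
    have [g [Gg gx]] := Gx [set x] (@irr1 _ x) (@delta1 _ x).
    by exists g => //; exact: spec_trans gx xz.
  by move=> z Hz; apply: Fint => G FG; exact: Hz _ (FW G FG).
move=> F0 x _ Fx U oU FU.
have [V [OV Vx VU]] := crux Htop Fx oU FU.
by exists V; split => //; exact: O_SI2.
Qed.
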